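(* Let $n\ge 3$ and $m\ge 2$ be integers, let $S_n=K_{1,n}$ be the star with $n$ leaves and $P_m$ the path on $m$ vertices. Then $AT(S_n+_S P_m)=3$.
   Context: For an orientation $D$, a subdigraph is Eulerian if every vertex has equal in- and outdegree in it; $D$ is an AT-orientation if the numbers of Eulerian subgraphs with an even and with an odd number of arcs differ; $AT(G)$ is the smallest $k$ such that $G$ has an AT-orientation of maximum outdegree at most $k-1$. $S(G)$ is obtained from $G$ by subdividing each edge once, with vertex set identified with $V(G)\cup E(G)$. $G+_S H$ has vertex set $(V(G)\cup E(G))\times V(H)$, with $(u_1,u_2)\sim(v_1,v_2)$ iff [$u_1=v_1\in V(G)$ and $u_2v_2\in E(H)$] or [$u_2=v_2$ and $u_1v_1\in E(S(G))$]. *)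

(* Defs.v *)
(* Simple graphs are given as a relation [g : rel T] on a
   finite type [T] (the concrete graphs below are symmetric and irreflexive). *)
From mathcomp Require Import all_boot.
Set Implicit Arguments. Unset Strict Implicit. Unset Printing Implicit Defensive.

Section Graphs.
Variables (T : finType) (g : rel T).

Definition is_orientation (o : rel T) : Prop :=
  (forall u v, o u v -> g u v) /\ (forall u v, g u v -> o u v != o v u).

Definition outdeg (o : rel T) (v : T) : nat := #|[set w | o v w]|.

Definition eulerian (o : rel T) (H : {set T * T}) : bool :=
  (H \subset [set a | o a.1 a.2]) &&
  [forall v, #|[set a in H | a.1 == v]| == #|[set a in H | a.2 == v]|].

Definition n_even_eulerian (o : rel T) : nat :=
  #|[set H : {set T * T} | eulerian o H && ~~ odd #|H|]|.
Definition n_odd_eulerian (o : rel T) : nat :=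
  #|[set H : {set T * T} | eulerian o H && odd #|H|]|.

Definition AT_orientation (o : rel T) : Prop :=
  is_orientation o /\ n_even_eulerian o <> n_odd_eulerian o.

Definition has_AT_orientation (d : nat) : Prop :=
  exists o : rel T, AT_orientation o /\ forall v, outdeg o v <= d.

Definition AT_number (k : nat) : Prop :=
  0 < k /\ has_AT_orientation k.-1 /\
  forall j, 0 < j -> j < k -> ~ has_AT_orientation j.-1.

Definition is_edge (e : {set T}) : bool :=
  [exists u, exists v, g u v && (e == [set u; v])].
Definition edge_type := {e : {set T} | is_edge e}.

(* The subdivision S(g), vertex set V(g) ∪ E(g). *)
Definition sub_vertex := (T + edge_type)%type.
Definition sub_adj : rel sub_vertex := fun x y =>
  match x, y with
  | inl v, inr e => v \in val e
  | inr e, inl v => v \in val e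
  | _, _ => false
  end.

End Graphs.

Definition splus_adj (T : finType) (g : rel T) (U : finType) (h : rel U)
  : rel (sub_vertex g * U) := fun x y =>
  match x.1, y.1 with
  | inl u1, inl v1 => (u1 == v1) && h x.2 y.2
  | _, _ => false
  end || ((x.2 == y.2) && sub_adj x.1 y.1).

Definition star_adj (n : nat) : rel 'I_n.+1 := fun i j =>
  (i != j) && ((val i == 0) || (val j == 0)).

Definition path_adj (m : nat) : rel 'I_m := fun i j =>
  ((val i).+1 == val j) || ((val j).+1 == val i).
Arguments star_adj n : clear implicits.
Arguments path_adj m : clear implicits.
Arguments splus_adj {T} g {U} h.

(* Main.v *)
Require Import Defs.
From mathcomp Require Import all_boot zify.
Set Implicit Arguments. Unset Strict Implicit. Unset Printing Implicit Defensive.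

Section Up.
Variables (T : finType) (g : rel T) (m : nat).
Definition VV := (sub_vertex g * 'I_m)%type.
Definition rk (x : VV) : nat := if x.1 is inl _ then m - x.2 else m.+1.
Definition GG : rel VV := splus_adj g (path_adj m).
Definition ori : rel VV := fun x y => GG x y && (rk y < rk x).

Lemma GG_sym x y : GG x y = GG y x.
Proof.
case: x y => [[u|e] i] [[v|f] j]; rewrite /GG /splus_adj /= (eq_sym i) //.
by rewrite !andbF !orbF (eq_sym u) /path_adj (orbC (_.+1 == _)).
Qed.

Lemma GG_rk x y : GG x y -> rk x != rk y.
Proof.
case: x y => [[u|e] i] [[v|f] j]; rewrite /GG /splus_adj /rk /= ?andbF ?orbF //.
- case/andP=> _; rewrite /path_adj => /orP[]/eqP h; move: h; rewrite /= => h; have := ltn_ord i; have := ltn_ord j; simpl in h; lia.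
- move=> _; have := ltn_ord i; lia.
- move=> _; have := ltn_ord j; lia.
Qed.

Lemma ori_orient : is_orientation GG ori.
Proof.
split; first by move=> u v /andP[].
move=> u v guv; rewrite /ori guv -GG_sym guv /=.
have := GG_rk guv; by case: (ltngtP (rk u) (rk v)).
Qed.

Lemma ori_outdeg v : outdeg ori v <= 2.
Proof.
rewrite /outdeg; case: v => [[u|e] i].
- apply: (@leq_trans 1) => //; apply/card_le1_eqP => [[y1 j1] [y2 j2]].
  rewrite !inE /ori /GG /splus_adj /rk /=.
  case: y1 => [v1|f1]; case: y2 => [v2|f2] /=; rewrite ?andbF ?orbF //.
  + case/andP=> /andP[/eqP <- p1] l1 /andP[/andP[/eqP <- p2] l2].
    have e : val j1 = val j2.
      move: p1 p2 l1 l2; rewrite /path_adj => /orP[]/eqP h1 /orP[]/eqP h2;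
      have := ltn_ord i; have := ltn_ord j1; have := ltn_ord j2; simpl in *; lia.
    by congr (_, _); apply: val_inj.
  + move=> _ /andP[_]; lia.
  + move=> /andP[_]; lia.
  + move=> /andP[_]; lia.
- have /existsP[u /existsP[w /andP[_ /eqP ee]]] := valP e.
  apply: (@leq_trans #|[set (inl u, i); (inl w, i)] : {set VV}|); last first.
    by rewrite cards2; case: (_ != _).
  apply: subset_leq_card; apply/subsetP => [[y j]].
  rewrite !inE /ori /GG /splus_adj /=.
  case: y => [v|f] /=; last by rewrite andbF.
  case/andP=> /andP[/eqP <-]; rewrite ee !inE => /orP[]/eqP -> _; by rewrite eqxx ?orbT.
Qed.

Lemma eul0 H : eulerian ori H -> H = set0.
Proof.
case/andP=> Hs /forallP Heq.
case: (set_0Vmem H) => [//|[a aH]].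
case: (@arg_maxnP _ a (mem H) (fun b => rk b.1) aH) => b bH0 bmax; have bH : b \in H := bH0.
have := Heq b.1.
have : 0 < #|[set a in H | a.1 == b.1]| by apply/card_gt0P; exists b; rewrite !inE bH eqxx.
move=> h /eqP e; rewrite e in h.
case/card_gt0P: h => c; rewrite !inE => /andP[cH /eqP cb].
have := subsetP Hs c cH; rewrite inE /ori => /andP[_]; rewrite cb.
move=> h; have hb : rk c.1 <= rk b.1 := bmax c cH; by rewrite leqNgt h in hb.
Qed.

Lemma eul_set0 : eulerian ori set0.
Proof.
rewrite /eulerian sub0set /=; apply/forallP => v.
by apply/eqP; apply: eq_card => x; rewrite !inE.
Qed.

Lemma upper : has_AT_orientation GG 2.
Proof.
exists ori; split; last exact: ori_outdeg.
split; first exact: ori_orient.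
rewrite /n_even_eulerian /n_odd_eulerian.
have -> : [set H | eulerian ori H && ~~ odd #|H|] = [set set0].
  apply/setP => H; rewrite !inE; case E: (eulerian ori H).
    by rewrite (eul0 E) cards0 eqxx.
  by apply/esym/negbTE; apply: contraFN E => /eqP ->; exact: eul_set0.
have -> : [set H | eulerian ori H && odd #|H|] = set0.
  apply/setP => H; rewrite !inE; case E: (eulerian ori H) => //.
  by rewrite (eul0 E) cards0.
by rewrite cards1 cards0.
Qed.
End Up.

Lemma sat11 : forall x1 x2 x3 x4 x5 x6 x7 x8 x9 x10 x11 : bool,
 ~~ (x1 && ~~ x6) -> ~~ (x1 && x7) -> ~~ (~~x6 && x7) ->
 ~~ (~~x5 && x6) -> ~~ (~~x5 && ~~x11) -> ~~ (x6 && ~~x11) ->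
 ~~ (~~x2 && x3) -> ~~ (~~x3 && x4) -> ~~ (~~x1 && x2) -> ~~ (~~x4 && x5) ->
 ~~ (~~x8 && x9) -> ~~ (~~x9 && x10) -> ~~ (~~x7 && x8) -> ~~ (~~x10 && x11) -> False.
Proof. by do 11! case. Qed.

Lemma out2 (T : finType) (o : rel T) w y z :
  outdeg o w <= 1 -> o w y -> o w z -> y != z -> False.
Proof.
move=> h oy oz yz.
have : #|[set y; z]| <= outdeg o w.
  apply: subset_leq_card; apply/subsetP => x; by rewrite !inE => /orP[]/eqP->.
by rewrite cards2 yz => /leq_trans/(_ h).
Qed.

Lemma notb (a b : bool) : a != b -> b = ~~ a.
Proof. by case: a; case: b. Qed.

Ltac ge := repeat match goal with x := _ |- _ => subst x end;
  rewrite /splus_adj /= ?eqxx /= ?(set21, set22) ?orbT //.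

Ltac dq := repeat match goal with x := _ |- _ => subst x end;
  apply/negP => /eqP; case => //; try (move/(congr1 val) => //=).

Lemma lower (n m : nat) d : 1 < n -> 1 < m -> d <= 1 ->
  ~ has_AT_orientation (splus_adj (star_adj n) (path_adj m)) d.
Proof.
move=> hn hm hd [o [[[_ oO] _] hout]].
have h1 v : outdeg o v <= 1 := leq_trans (hout v) hd.
have l1 : 1 < n.+1 by lia.
have l2 : 2 < n.+1 by lia.
have l0 : 0 < m by lia.
pose c : 'I_n.+1 := ord0. pose a : 'I_n.+1 := Ordinal l1. pose b : 'I_n.+1 := Ordinal l2.
pose i0 : 'I_m := Ordinal l0. pose i1 : 'I_m := Ordinal hm.
have ea_p : is_edge (star_adj n) [set c; a].
  by apply/existsP; exists c; apply/existsP; exists a; rewrite eqxx andbT.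
have eb_p : is_edge (star_adj n) [set c; b].
  by apply/existsP; exists c; apply/existsP; exists b; rewrite eqxx andbT.
pose ea : edge_type (star_adj n) := @exist _ (@is_edge _ (star_adj n)) [set c; a] ea_p.
pose eb : edge_type (star_adj n) := @exist _ (@is_edge _ (star_adj n)) [set c; b] eb_p.
pose V := (sub_vertex (star_adj n) * 'I_m)%type.
pose C0 : V := (inl c, i0). pose C1 : V := (inl c, i1).
pose A0 : V := (inl a, i0). pose A1 : V := (inl a, i1).
pose B0 : V := (inl b, i0). pose B1 : V := (inl b, i1).
pose EA0 : V := (inr ea, i0). pose EA1 : V := (inr ea, i1).
pose EB0 : V := (inr eb, i0). pose EB1 : V := (inr eb, i1).
have E1 := notb (oO C0 EA0 ltac:(ge)).
have E2 := notb (oO EA0 A0 ltac:(ge)).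
have E3 := notb (oO A0 A1 ltac:(ge)).
have E4 := notb (oO A1 EA1 ltac:(ge)).
have E5 := notb (oO EA1 C1 ltac:(ge)).
have E6 := notb (oO C1 C0 ltac:(ge)).
have E7 := notb (oO C0 EB0 ltac:(ge)).
have E8 := notb (oO EB0 B0 ltac:(ge)).
have E9 := notb (oO B0 B1 ltac:(ge)).
have E10 := notb (oO B1 EB1 ltac:(ge)).
have E11 := notb (oO EB1 C1 ltac:(ge)).
have P (w y z : V) : y != z -> ~~ (o w y && o w z).
  by move=> yz; apply/negP => /andP[oy oz]; exact: out2 (h1 w) oy oz yz.
have sab : [set c; a] != [set c; b].
  apply/negP => /eqP /setP /(_ a); rewrite !inE eqxx orbT.
  by rewrite /a /b /c -!val_eqE /=.
have dAB (i : 'I_m) : (inr ea, i) != (inr eb, i) :> V.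
  apply/negP => /eqP /(congr1 (fun x : V => if x.1 is inr e then val e else set0)) /= e.
  by rewrite e eqxx in sab.
have Q1 := P C0 EA0 C1 ltac:(dq).
have Q2 := P C0 EA0 EB0 (dAB i0).
have Q3 := P C0 C1 EB0 ltac:(dq).
have Q4 := P C1 EA1 C0 ltac:(dq).
have Q5 := P C1 EA1 EB1 (dAB i1).
have Q6 := P C1 C0 EB1 ltac:(dq).
have Q7 := P A0 EA0 A1 ltac:(dq).
have Q8 := P A1 A0 EA1 ltac:(dq).
have Q9 := P EA0 C0 A0 ltac:(dq).
have Q10 := P EA1 A1 C1 ltac:(dq).
have Q11 := P B0 EB0 B1 ltac:(dq).
have Q12 := P B1 B0 EB1 ltac:(dq).
have Q13 := P EB0 C0 B0 ltac:(dq).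
have Q14 := P EB1 B1 C1 ltac:(dq).
move: Q1 Q2 Q3 Q4 Q5 Q6 Q7 Q8 Q9 Q10 Q11 Q12 Q13 Q14.
rewrite ?E1 ?E2 ?E3 ?E4 ?E5 ?E6 ?E7 ?E8 ?E9 ?E10 ?E11.
exact: sat11.
Qed.

Theorem corollary3p5 (n m : nat) :
  3 <= n -> 2 <= m ->
  AT_number (splus_adj (star_adj n) (path_adj m)) 3.
Proof.
move=> hn hm; split => //; split; first exact: (upper (star_adj n) m).
move=> j j0 j3; apply: lower; try lia.
Qed.
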